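(* Let $k,r\ge 0$ and let $T$ be a tree with $n\le 2^r+2$ vertices and $l<k$ leaves, precolored so that its colored vertices are exactly its leaves, where this coloring of the leaves does not extend to a proper 3-coloring of $T$. Then Spoiler has a winning strategy in $\mathcal{G}^k_r(T)$.
   Context: Colors are red, blue, green; a coloring is proper if adjacent vertices get different colors. A $k$-precolored graph is a finite graph together with an assignment of colors to at most $k$ of its vertices. The game $\mathcal{G}^k_r(H)$ on a $k$-precolored graph $H$ starts from the given precoloring and lasts $r$ rounds; in each round Spoiler may erase the colors of some currently colored vertices and then selects a vertex, which Duplicator colors with one of the three colors; after each round at most $k$ vertices may be colored. Duplicator wins if the initial partial coloring and the partial coloring after each round are proper; otherwise Spoiler wins. *)

(* Defs.v *)
From mathcomp Require Import all_boot.
Set Implicit Arguments. Unset Strict Implicit. Unset Printing Implicit Defensive.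

(* A finite simple graph on a finType V is given by a symmetric irreflexive
   relation e : rel V. A partial colouring is a map V -> option 'I_3
   (None = uncoloured). *)

Definition color := 'I_3.
Definition pcoloring (V : finType) := V -> option color.

Definition connected_graph (V : finType) (e : rel V) : Prop :=
  forall x y : V, connect e x y.

Definition acyclic_graph (V : finType) (e : rel V) : Prop :=
  forall c : seq V, uniq c -> 3 <= size c -> ~~ cycle e c.

Definition is_tree (V : finType) (e : rel V) : Prop :=
  connected_graph e /\ acyclic_graph e.

Definition is_leaf (V : finType) (e : rel V) (x : V) : bool :=
  #|[pred y | e x y]| == 1.

Definition num_leaves (V : finType) (e : rel V) : nat :=
  #|[pred x | is_leaf e x]|.

Definition num_colored (V : finType) (c : pcoloring V) : nat :=
  #|[pred x | c x != None]|.

Definition proper_pc (V : finType) (e : rel V) (c : pcoloring V) : Prop :=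
  forall x y a b, e x y -> c x = Some a -> c y = Some b -> a <> b.

Definition erasure_of (V : finType) (c c' : pcoloring V) : Prop :=
  forall x, c' x = c x \/ c' x = None.

Definition set_color (V : finType) (c : pcoloring V) (v : V) (a : color)
  : pcoloring V := fun x => if x == v then Some a else c x.

(* Spoiler has a winning strategy in the game G^k_r started from the
   partial colouring c: either c is already improper, or r > 0 and Spoiler
   has a legal move (erase some colours, select a vertex v, such that at
   most k vertices are coloured after v is coloured) such that for every
   colour Duplicator assigns to v, Spoiler wins the remaining r-1 rounds. *)
Fixpoint spoiler_wins (V : finType) (e : rel V) (k r : nat) (c : pcoloring V)
  : Prop :=
  ~ proper_pc e c \/
  match r with
  | 0 => False
  | r'.+1 =>
      exists (c' : pcoloring V) (v : V),
        erasure_of c c' /\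
        (forall a, num_colored (set_color c' v a) <= k) /\
        (forall a, spoiler_wins e k r' (set_color c' v a))
  end.

Definition extends (V : finType) (f : V -> color) (c : pcoloring V) : Prop :=
  forall x a, c x = Some a -> f x = a.

Definition proper_total (V : finType) (e : rel V) (f : V -> color) : Prop :=
  forall x y, e x y -> f x <> f y.

(* Main.v *)
Require Import Defs.
From mathcomp Require Import all_boot.
From mathcomp Require Import zify.
From Stdlib Require Import Classical ClassicalEpsilon.
Set Implicit Arguments. Unset Strict Implicit. Unset Printing Implicit Defensive.

Section Game.
Variables (V : finType) (e : rel V).
Hypothesis e_sym : symmetric e.
Hypothesis e_irr : irreflexive e.
Hypothesis e_acy : acyclic_graph e.

Implicit Types (A B D S C : {set V}).
Definition rin (A : {set V}) : rel V := fun x y => [&& x \in A, y \in A & e x y].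

Lemma rin_sym A : symmetric (rin A).
Proof. by move=> x y; rewrite /rin andbCA e_sym. Qed.

Lemma rin_e A : subrel (rin A) e.
Proof. by move=> x y /and3P[]. Qed.

Lemma rin_mono (A B : {set V}) : A \subset B -> forall x y, connect (rin A) x y -> connect (rin B) x y.
Proof.
move=> sAB; apply: connect_sub => x y /and3P[xA yA exy]; apply: connect1.
by rewrite /rin (subsetP sAB _ xA) (subsetP sAB _ yA).
Qed.

Definition br (A : {set V}) x := [set y | connect (rin A) x y].

Lemma path_last_in A x p : path (rin A) x p -> p != [::] -> last x p \in A.
Proof.
elim: p x => [//|z p IH] x /= /andP[/and3P[_ zA _] pp] _.
case: p IH pp => [|w p] IH pp //=. exact: (IH z pp).
Qed.

Lemma connect_in A x y : connect (rin A) x y -> x != y -> y \in A.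
Proof.
case/connectP=> p pp ->; case: p pp => [|z p] pp; first by rewrite eqxx.
by move=> _; apply: path_last_in.
Qed.

Lemma br_sub A x : x \in A -> br A x \subset A.
Proof.
move=> xA; apply/subsetP=> y; rewrite inE => cxy.
by case: (eqVneq x y) => [<-//|nxy]; exact: connect_in cxy nxy.
Qed.

Lemma br_self A x : x \in br A x.
Proof. by rewrite inE connect0. Qed.

Lemma br_eq A x y : connect (rin A) x y -> br A x = br A y.
Proof.
move=> cxy; apply/setP=> z; rewrite !inE; apply/idP/idP => h.
  by rewrite (sym_connect_sym (rin_sym A)) in cxy; exact: connect_trans cxy h.
exact: connect_trans cxy h.
Qed.

Lemma uconnectP A x y : connect (rin A) x y ->
  exists2 p, path (rin A) x p & uniq (x :: p) /\ y = last x p.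
Proof.
case/connectP=> p pp ->; case/shortenP: pp => p' pp' up' _.
by exists p'.
Qed.

Lemma path_all_in A x p : path (rin A) x p -> p != [::] -> all (mem A) (x :: p).
Proof.
elim: p x => [//|z p IH] x /= /andP[/and3P[xA zA _] pp] _.
rewrite xA /=; case: p IH pp => [|w p] IH pp; first by rewrite /= zA.
exact: (IH z pp).
Qed.

Lemma no_bypass A v u w : e v u -> e v w -> u != w ->
  connect (rin (A :\ v)) u w -> False.
Proof.
move=> evu evw nuw /uconnectP[p pp [up wl]].
have pn : p != [::] by case: p pp up wl => //= _ _ wl; rewrite wl eqxx in nuw.
have al := path_all_in pp pn.
have vn : v \notin u :: p.
  apply/negP => vin; have := allP al v vin; by rewrite /= !inE eqxx.
have sz : 3 <= size [:: v, u & p] by case: p pn {pp up wl al vn}.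
have uq : uniq [:: v, u & p] by rewrite /= -/(uniq (u :: p)) up andbT; exact: vn.
have := e_acy uq sz; rewrite /= evu /= rcons_path (sub_path (@rin_e _) pp) -wl e_sym evw.
by [].
Qed.

Lemma first_step A u x : connect (rin A) u x -> u != x ->
  exists2 w, rin A u w & connect (rin (A :\ u)) w x.
Proof.
move=> /uconnectP[p pp [up ->]]; case: p pp up => [|w p] /=; first by rewrite eqxx.
move=> /andP[ruw pp] /andP[un uq] _; exists w => //.
apply/connectP; exists p => //.
apply: (@sub_in_path _ (predC1 u)) pp.
  move=> a b au bu /and3P[aA bA eab]; rewrite !inE /= in au bu; by rewrite /rin !inE au bu aA bA eab.
by apply/allP=> z zin /=; apply/eqP=> zu; rewrite -zu zin in un.
Qed.

Lemma connect_avoid A x y v : connect (rin A) x y -> ~~ connect (rin A) x v ->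
  connect (rin (A :\ v)) x y.
Proof.
move=> /connectP[p pp ->] nxv.
suff H : forall a, connect (rin A) x a -> connect (rin (A :\ v)) x a ->
  path (rin A) a p -> connect (rin (A :\ v)) x (last a p).
  by apply: H => //; exact: connect0.
clear pp; elim: p => [//|b p IH] a cxa cxa' /= /andP[rab pp].
have cxb : connect (rin A) x b := connect_trans cxa (connect1 rab).
apply: IH => //; apply: connect_trans cxa' (connect1 _).
case/and3P: rab => aA bA eab; rewrite /rin !inE aA bA eab !andbT.
apply/andP; split; apply/eqP => h; subst; by rewrite ?cxa ?cxb in nxv.
Qed.

Lemma mindeg2_false (D : {set V}) x0 : x0 \in D ->
  (forall y, y \in D -> 2 <= #|[set z in D | e y z]|) -> False.
Proof.
move=> x0D deg.
suff H : forall n, exists x p, [/\ x \in D, all (mem D) p, path e x p,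
   uniq (x :: p) & n <= size p].
  have [x [p [xD pD _ up]]] := H #|D|; rewrite leqNgt => /negP; apply.
  have : size (x :: p) <= size (enum D).
    apply: uniq_leq_size => // z; rewrite inE mem_enum => /orP[/eqP->//|].
    by move/(allP pD).
  by rewrite -cardE.
elim=> [|n [x [p [xD pD pp up np]]]]; first by exists x0, [::].
have [z zN zh] : exists2 z, z \in [set z in D | e x z] & z != head x p.
  apply: NNPP => H; have := deg x xD.
  have : [set z in D | e x z] \subset [set head x p].
    apply/subsetP => z zN; rewrite inE; apply: NNPP => nz; apply: H; exists z => //.
    by apply/negP.
  by move/subset_leq_card; rewrite cards1 => h1 h2; have := leq_trans h2 h1.
rewrite inE in zN; case/andP: zN => zD exz.
case zin: (z \in x :: p).
  exfalso; have zx : z != x by apply/eqP => h; subst; rewrite e_irr in exz.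
  move: zin; rewrite inE (negbTE zx) /= => zp.
  case/splitPr: zp pp up zh => p1 p2 pp up zh.
  have p1n : p1 != [::] by case: p1 pp up zh => //=; rewrite eqxx.
  have U : uniq (x :: rcons p1 z).
    have : uniq ((x :: rcons p1 z) ++ p2) by rewrite /= -cats1 -catA.
    by rewrite cat_uniq => /andP[].
  have Sz : 3 <= size (x :: rcons p1 z) by rewrite /= size_rcons; case: p1 p1n {pp up zh U}.
  have := e_acy U Sz; rewrite /= rcons_path rcons_path last_rcons.
  rewrite [e z x]e_sym exz andbT.
  by move: pp; rewrite cat_path /= => /and3P[-> -> _].
exists z, (x :: p); split=> //=.
- by rewrite xD.
- by rewrite e_sym exz.
- by rewrite zin.
Qed.

Definition obs S (c : pcoloring V) := ~ exists f : V -> color,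
  (forall x a, x \in S -> c x = Some a -> f x = a) /\
  (forall x y, x \in S -> y \in S -> e x y -> f x <> f y).
Definition minimal S c := forall S' : {set V}, S' \subset S -> obs S' c -> #|S| <= #|S'|.
Definition colored_in S (c : pcoloring V) := #|[set x in S | c x != None]|.

Lemma obs_mono S c1 c2 : obs S c1 ->
  (forall x a, x \in S -> c1 x = Some a -> c2 x = Some a) -> obs S c2.
Proof.
move=> H hc [f [fe fp]]; apply: H; exists f; split=> // x a xS /(hc _ _ xS).
exact: fe.
Qed.

Lemma exists_min S c : obs S c -> exists2 S' : {set V}, S' \subset S & obs S' c /\ minimal S' c.
Proof.
have [n] := ubnP #|S|; elim: n S => // n IH S lt hS.
case: (classic (minimal S c)) => [m|nm]; first by exists S.
have [S' [s o lt']] : exists S' : {set V}, [/\ S' \subset S, obs S' c & #|S'| < #|S|].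
  apply: NNPP => H; apply: nm => S' s o; rewrite leqNgt; apply/negP => l.
  by apply: H; exists S'.
have [S'' s' [o' m']] := IH S' (leq_trans lt' (ltnSE lt)) o.
exists S'' => //; exact: subset_trans s' s.
Qed.

Lemma glue S c v a : v \in S -> c v = Some a -> obs S c ->
  exists2 x, x \in S :\ v & obs (v |: br (S :\ v) x) c.
Proof.
move=> vS cv oS; apply: NNPP => H.
have Hf : forall C : {set V}, exists f : V -> color, forall x, x \in S :\ v ->
    C = br (S :\ v) x ->
    (forall y b, y \in v |: C -> c y = Some b -> f y = b) /\
    (forall y z, y \in v |: C -> z \in v |: C -> e y z -> f y <> f z).
  move=> C; case: (classic (exists2 x, x \in S :\ v & C = br (S :\ v) x)).
    case=> x xS ->; have : ~ obs (v |: br (S :\ v) x) c by move=> o; apply: H; exists x.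
    move/NNPP => [f [fe fp]]; exists f => y yS eq; by split.
  move=> no; exists (fun _ => ord0) => y yS eq; exfalso; apply: no; by exists y.
pose g C := proj1_sig (constructive_indefinite_description _ (Hf C)).
have gP C := proj2_sig (constructive_indefinite_description _ (Hf C)).
pose F y := if y == v then a else g (br (S :\ v) y) y.
apply: oS; exists F; split.
  move=> x b xS cx; rewrite /F; case: (eqVneq x v) => [xv|xv].
    by subst; rewrite cv in cx; case: cx.
  have xS' : x \in S :\ v by rewrite !inE xv xS.
  have [ge _] := gP (br (S :\ v) x) x xS' erefl.
  by apply: ge cx; rewrite !inE connect0 orbT.
have key y z : y \in S :\ v -> e v z -> z \in S -> y = z -> a <> g (br (S :\ v) y) y.
  move=> yS evz zS yz; subst.
  have [ge gp] := gP (br (S :\ v) z) z yS erefl.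
  rewrite -(ge v a _ cv); last by rewrite !inE eqxx.
  by apply: gp; rewrite ?evz // !inE ?eqxx ?connect0 ?orbT.
move=> x y xS yS exy; rewrite /F.
case: (eqVneq x v) => [xv|xv]; case: (eqVneq y v) => [yv|yv].
- by subst; rewrite e_irr in exy.
- subst; have yS' : y \in S :\ v by rewrite !inE yv yS.
  exact: key yS' exy yS erefl.
- subst; have xS' : x \in S :\ v by rewrite !inE xv xS.
  rewrite e_sym in exy; move=> h; apply: (key x x xS' exy xS erefl); by rewrite h.
- have xS' : x \in S :\ v by rewrite !inE xv xS.
  have yS' : y \in S :\ v by rewrite !inE yv yS.
  have rxy : rin (S :\ v) x y by rewrite /rin xS' yS' exy.
  rewrite -(br_eq (connect1 rxy)).
  have [_ gp] := gP (br (S :\ v) x) x xS' erefl.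
  by apply: gp; rewrite // !inE ?connect0 ?(connect1 rxy) orbT.
Qed.

Lemma obs_isolated C c v a : v \notin C -> c v = Some a -> obs (v |: C) c ->
  (forall y, y \in C -> ~~ e v y) -> obs C c.
Proof.
move=> vC cv o iso [f [fe fp]]; apply: o.
exists (fun y => if y == v then a else f y); split.
  move=> x b; rewrite !inE; case: (eqVneq x v) => [->|xv] /=.
    by rewrite cv => _ [].
  exact: fe.
move=> x y; rewrite !inE.
case: (eqVneq x v) => [->|xv]; case: (eqVneq y v) => [->|yv] //=.
- by rewrite e_irr.
- by move=> _ yC; rewrite (negbTE (iso y yC)).
- by move=> xC _; rewrite e_sym (negbTE (iso x xC)).
- exact: fp.
Qed.

Lemma glue_nb S c c' v a : minimal S c -> v \in S -> c' v = Some a -> obs S c' ->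
  (forall x, x \in S -> x != v -> c' x = c x) ->
  exists2 u, (u \in S) && e v u & obs (v |: br (S :\ v) u) c'.
Proof.
move=> mS vS cv oS ag.
have [x xS o] := glue vS cv oS.
have bsub : br (S :\ v) x \subset S :\ v by apply: br_sub.
case: (boolP [exists y in br (S :\ v) x, e v y]).
  case/exists_inP => y yb evy; exists y.
    by move/subsetP: bsub => /(_ y yb); rewrite !inE evy => /andP[_ ->].
  by rewrite -(br_eq (A := S :\ v) (x := x)) //; rewrite inE in yb.
move/exists_inPn => iso; exfalso.
have vb : v \notin br (S :\ v) x.
  apply/negP => /(subsetP bsub); by rewrite !inE eqxx.
have o' := obs_isolated vb cv o iso.
have o2 : obs (br (S :\ v) x) c.
  apply: (obs_mono o') => y b yb; move/subsetP: bsub => /(_ y yb).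
  by rewrite !inE => /andP[yv yS]; rewrite ag.
have := mS _ (subset_trans bsub (subD1set S v)) o2.
have := subset_leq_card bsub; rewrite (cardsD1 v S) vS.
move=> h1 h2; have := leq_trans h2 h1; by rewrite ltnn.
Qed.

Lemma deg3 S c y : obs S c -> minimal S c -> y \in S -> c y = None ->
  3 <= #|[set z in S | e y z]|.
Proof.
move=> oS mS yS cy; rewrite leqNgt; apply/negP => small.
have no : ~ obs (S :\ y) c.
  move=> o; have := mS _ (subD1set S y) o; rewrite (cardsD1 y S) yS.
  by rewrite ltnn.
have [f [fe fp]] := NNPP _ no.
pose I := [set f z | z in [set z in S | e y z]].
have cI : #|I| <= 2 by apply: leq_trans (leq_imset_card _ _) _; rewrite -ltnS.
have [a aI] : exists a, a \notin I.
  apply: NNPP => H.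
  have : [set: color] \subset I.
    by apply/subsetP => a _; apply: NNPP => h; apply: H; exists a; apply/negP.
  move/subset_leq_card; rewrite cardsT card_ord => h.
  by have := leq_trans h cI.
apply: oS; exists (fun z => if z == y then a else f z); split.
  move=> x b xS; case: (eqVneq x y) => [->|xy]; first by rewrite cy.
  by apply: fe; rewrite !inE xy.
move=> x z xS zS exz.
case: (eqVneq x y) => [xy|xy]; case: (eqVneq z y) => [zy|zy].
- by subst; rewrite e_irr in exz.
- subst => h; move/negP: aI; apply; apply/imsetP; exists z => //; by rewrite !inE zS exz.
- subst => h; move/negP: aI; apply; apply/imsetP; exists x => //; by rewrite !inE xS e_sym exz.
- by apply: fp; rewrite // !inE ?xy ?zy.
Qed.

Lemma some_uncolored S c : proper_pc e c -> obs S c -> exists2 y, y \in S & c y = None.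
Proof.
move=> pc oS; apply: NNPP => H; apply: oS.
have col x : x \in S -> exists b, c x = Some b.
  move=> xS; case cx: (c x) => [b|]; first by exists b.
  by exfalso; apply: H; exists x.
exists (fun x => odflt ord0 (c x)); split.
  by move=> x a _ ->.
move=> x y xS yS exy; have [a cx] := col x xS; have [b cy'] := col y yS.
rewrite cx cy' /=; exact: pc exy cx cy'.
Qed.

Lemma size4 S c : proper_pc e c -> obs S c -> minimal S c -> 4 <= #|S|.
Proof.
move=> pc oS mS; have [y yS cy] := some_uncolored pc oS.
have := deg3 oS mS yS cy.
have : [set z in S | e y z] \subset S :\ y.
  apply/subsetP => z; rewrite !inE => /andP[-> eyz]; rewrite andbT.
  by apply/eqP => h; subst; rewrite e_irr in eyz.
move/subset_leq_card; rewrite (cardsD1 y S) yS => h1 h2.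
by have := leq_trans h2 h1.
Qed.

Lemma neq_of_e x y : e x y -> x != y.
Proof. by move=> exy; apply/eqP => h; subst; rewrite e_irr in exy. Qed.

Lemma in_D1 S x y : x \in S -> e y x -> x \in S :\ y.
Proof. by move=> xS eyx; rewrite !inE xS andbT eq_sym neq_of_e. Qed.

Lemma br_disj S u v : u \in S -> v \in S -> e v u ->
  #|br (S :\ v) u| + #|br (S :\ u) v| <= #|S|.
Proof.
move=> uS vS evu.
have s1 : br (S :\ v) u \subset S.
  exact: subset_trans (br_sub (in_D1 uS evu)) (subD1set S v).
have s2 : br (S :\ u) v \subset S.
  by rewrite e_sym in evu; exact: subset_trans (br_sub (in_D1 vS evu)) (subD1set S u).
have dj : br (S :\ v) u :&: br (S :\ u) v = set0.
  apply/setP => x; rewrite !inE; apply/negP => /andP[cux cvx].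
  case: (eqVneq u x) => [ux|ux].
    subst x; have := connect_in cvx (neq_of_e evu); by rewrite !inE eqxx.
  have [w ruw cwx] := first_step cux ux.
  case/and3P: ruw => _ wS euw.
  have wv : v != w by move: wS; rewrite !inE eq_sym => /andP[].
  apply: (no_bypass (A := S) (v := u) (u := v) (w := w)) => //; first by rewrite e_sym.
  apply: connect_trans cvx _.
  rewrite (sym_connect_sym (rin_sym _)).
  apply: rin_mono cwx; apply/subsetP => z; rewrite !inE => /and3P[-> _ ->].
  by rewrite andbT.
have sU : br (S :\ v) u :|: br (S :\ u) v \subset S by rewrite subUset s1 s2.
have := subset_leq_card sU.
by rewrite cardsU dj cards0 subn0.
Qed.

Lemma br_nest S u v w : u \in S -> v \in S -> w \in S -> e v u -> e u w -> w != v ->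
  #|br (S :\ u) w| < #|br (S :\ v) u|.
Proof.
move=> uS vS wS evu euw wv; apply: proper_card; apply/properP; split.
  apply/subsetP => y; rewrite !inE => cwy.
  have ncv : ~~ connect (rin (S :\ u)) w v.
    apply/negP => h; apply: (no_bypass (A := S) (v := u) (u := w) (w := v)) => //.
    by rewrite e_sym.
  have := connect_avoid cwy ncv => cwy'.
  have ruw : rin (S :\ v) u w.
    by rewrite /rin !inE uS wS euw eq_sym (neq_of_e evu) wv.
  apply: connect_trans (connect1 ruw) (rin_mono _ cwy').
  by apply/subsetP => z; rewrite !inE => /and3P[-> _ ->].
exists u; first exact: br_self.
apply/negP => /(subsetP (br_sub (in_D1 wS euw))); by rewrite !inE eqxx.
Qed.

Lemma centroid S x0 : x0 \in S -> exists2 v, v \in S &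
  forall u, u \in S -> e v u -> 2 * #|br (S :\ v) u| <= #|S|.
Proof.
move=> x0S.
pose mb v := \max_(u | (u \in S) && e v u) #|br (S :\ v) u|.
have [v vS vmin] := arg_minnP mb x0S.
exists v => // u uS evu; rewrite leqNgt; apply/negP => big.
have h1 : #|br (S :\ v) u| <= mb v by apply: (leq_bigmax_cond (F := fun u => #|br (S :\ v) u|)); rewrite uS evu.
have h2 : mb u <= #|br (S :\ v) u| - 1.
  apply/bigmax_leqP => w /andP[wS euw].
  case: (eqVneq w v) => [->|wv].
    have := br_disj uS vS evu; lia.
  have := br_nest uS vS wS evu euw wv; lia.
have := vmin u uS; lia.
Qed.

Lemma colored_sub A B c : A \subset B -> colored_in A c <= colored_in B c.
Proof.
move=> sAB; apply: subset_leq_card; apply/subsetP => x; rewrite !inE => /andP[xA ->].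
by rewrite (subsetP sAB _ xA).
Qed.

Lemma colored_U1 v A c : colored_in (v |: A) c <= colored_in A c + 1.
Proof.
have : [set x in v |: A | c x != None] \subset v |: [set x in A | c x != None].
  apply/subsetP => x; rewrite !inE => /andP[/orP[->//|xA] cx]; by rewrite xA cx orbT.
move/subset_leq_card; rewrite cardsU1 /colored_in.
have := leq_b1 (v \notin [set x in A | c x != None]); lia.
Qed.

Lemma main l k : l < k -> forall r c S, obs S c -> minimal S c ->
  colored_in S c <= l -> #|S| <= 2 ^ r + 2 -> spoiler_wins e k r c.
Proof.
move=> lk; elim=> [|r IH] c S oS mS cS sS.
  case: (classic (proper_pc e c)) => pc; last by left.
  have := size4 pc oS mS; rewrite expn0 in sS; lia.
case: (classic (proper_pc e c)) => pc; [right | by left].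
have s4 := size4 pc oS mS.
have [x0 x0S _] := some_uncolored pc oS.
have [v vS vc] := centroid x0S.
have cvN : c v = None.
  case cv: (c v) => [a0|] //; exfalso.
  have [u /andP[uS evu] o] := glue_nb mS vS cv oS (fun _ _ _ => erefl).
  have sub : v |: br (S :\ v) u \subset S.
    by rewrite subUset sub1set vS (subset_trans (br_sub (in_D1 uS evu)) (subD1set S v)).
  have := mS _ sub o; rewrite cardsU1.
  have := vc u uS evu; have := leq_b1 (v \notin br (S :\ v) u); lia.
pose c' : pcoloring V := fun x => if x \in S then c x else None.
exists c', v; split; first by move=> x; rewrite /c'; case: (x \in S); [left|right].
have cnt a : num_colored (set_color c' v a) <= colored_in S c + 1.
  rewrite /num_colored.
  have : [pred x | set_color c' v a x != None] \subset v |: [set x in S | c x != None].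
    apply/subsetP => x; rewrite !inE /set_color /c'; case: (x == v) => //=.
    by case: (x \in S).
  move/subset_leq_card => h; apply: leq_trans h _; rewrite cardsU1 /colored_in addnC.
  by rewrite leq_add2l leq_b1.
split; first by move=> a; have := cnt a; lia.
move=> a; set c'' := set_color c' v a.
have ag : forall x, x \in S -> x != v -> c'' x = c x.
  by move=> x xS xv; rewrite /c'' /set_color (negbTE xv) /c' xS.
have oS'' : obs S c''.
  apply: (obs_mono oS) => x b xS cx; rewrite ag //.
  by apply/eqP => h; subst; rewrite cvN in cx.
have cv'' : c'' v = Some a by rewrite /c'' /set_color eqxx.
have [u /andP[uS evu] o] := glue_nb mS vS cv'' oS'' ag.
have [S' s' [o' m']] := exists_min o.
set B := br (S :\ v) u.
have Bsub : B \subset S :\ v := br_sub (in_D1 uS evu).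
have inB x : x \in B -> x \in S /\ x != v.
  by move=> xB; move: (subsetP Bsub x xB); rewrite !inE => /andP[-> ->].
apply: (IH c'' S') => //; last first.
  have := subset_leq_card s'; rewrite cardsU1; have := vc u uS evu.
  have := leq_b1 (v \notin B); rewrite expnS in sS; lia.
have [w /andP[wS evw] wu] : exists2 w, (w \in S) && e v w & w != u.
  apply: NNPP => H; have := deg3 oS mS vS cvN.
  have : [set z in S | e v z] \subset [set u].
    apply/subsetP => z; rewrite !inE => zz; apply/eqP; apply: NNPP => nz; apply: H.
    by exists z => //; apply/eqP.
  move/subset_leq_card; rewrite cards1 => h1 h2; by have := leq_trans h2 h1.
set D := br (S :\ v) w.
have Dsub : D \subset S :\ v := br_sub (in_D1 wS evw).
have [t tD ct] : exists2 t, t \in D & c t != None.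
  apply: NNPP => H; apply: (mindeg2_false (D := D) (x0 := w)); first exact: br_self.
  move=> y yD.
  have yS' : y \in S :\ v := subsetP Dsub y yD.
  have yS : y \in S by move: yS'; rewrite !inE => /andP[].
  have cy : c y = None.
    case E: (c y) => [b|] //; exfalso; apply: H; exists y => //; by rewrite E.
  have := deg3 oS mS yS cy.
  have : [set z in S | e y z] \subset v |: [set z in D | e y z].
    apply/subsetP => z; rewrite !inE => /andP[zS eyz].
    case: (eqVneq z v) => //= zv; rewrite eyz andbT.
    move: yD; rewrite /D !inE => yD.
    apply: connect_trans yD (connect1 _); by rewrite /rin yS' !inE zv zS eyz.
  move/subset_leq_card => h1 h2; have := leq_trans h2 h1; rewrite cardsU1.
  case: (v \notin _) => //= h3; exact: ltnW.
have tS' : t \in S :\ v := subsetP Dsub t tD.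
have tB : t \notin B.
  apply/negP => tB; apply: (no_bypass (A := S) (v := v) (u := u) (w := w)) => //.
    by rewrite eq_sym.
  move: tB tD; rewrite /B /D !inE => cut cwt.
  apply: connect_trans cut _; by rewrite (sym_connect_sym (rin_sym _)).
have eqB : colored_in B c'' = colored_in B c.
  apply: eq_card => z0; rewrite !inE; case: (boolP (connect _ u z0)) => //= cz.
  have zB : z0 \in B by rewrite /B inE.
  by have [z0S z0v] := inB z0 zB; rewrite ag.
have ltB : colored_in B c < colored_in S c.
  apply: proper_card; apply/properP; split.
    apply/subsetP => z0; rewrite inE => /andP[z0B cz0]; by rewrite inE cz0 (inB z0 z0B).1.
  exists t; last by rewrite inE (negbTE tB).
  by rewrite inE ct andbT; move: tS'; rewrite !inE => /andP[].
apply: leq_trans (colored_sub c'' s') _; apply: leq_trans (colored_U1 v B c'') _.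
by rewrite eqB addn1; exact: leq_trans ltB cS.
Qed.
End Game.

Theorem lemma8 (k r : nat) (V : finType) (e : rel V)
  (e_sym : symmetric e) (e_irr : irreflexive e)
  (T_tree : is_tree e)
  (n_le : #|V| <= 2 ^ r + 2)
  (l_lt : num_leaves e < k)
  (c0 : pcoloring V)
  (c0_leaves : forall x, (c0 x != None) = is_leaf e x)
  (no_ext : ~ exists f : V -> color, extends f c0 /\ proper_total e f) :
  spoiler_wins e k r c0.
Proof.
have acy : acyclic_graph e := T_tree.2.
have oT : obs e [set: V] c0.
  move=> [f [fe fp]]; apply: no_ext; exists f; split.
    by move=> x a cx; apply: fe cx.
  by move=> x y exy; apply: fp.
have [S0 _ [o0 m0]] := exists_min oT.
have eqn : num_colored c0 = num_leaves e.
  by apply: eq_card => x; rewrite !inE /=.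
apply: (main e_sym e_irr acy (l := num_colored c0)) o0 m0 _ _.
- by rewrite eqn.
- apply: subset_leq_card; apply/subsetP => x; rewrite !inE => /andP[_ ->]; by [].
- exact: leq_trans (max_card _) n_le.
Qed.
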